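(* Let $V$ be a braided vector space of diagonal type over a field $F$ of characteristic zero with basis $x_1,\dots,x_n$ and braiding $C(x_i\otimes x_j)=p_{i,j}x_j\otimes x_i$, and let $\mathfrak B(V)$ be its Nichols algebra. Let $i\neq j$. Then in $\mathfrak B(V)$: (i) $[x_i,x_j]_L=0$ if and only if $p_{i,j}=p_{j,i}=1$; (ii) $[x_i,x_j]_R=0$ if and only if $p_{i,j}=p_{j,i}=1$, or $p_{i,j}=\omega,\ p_{j,i}=\omega^2$, or $p_{i,j}=\omega^2,\ p_{j,i}=\omega$, where $\omega$ is a primitive cube root of unity.
   Context: $\mathfrak B(V)$ is the quotient of $T(V)$ by $\bigoplus_{m\ge2}\ker S_m$ (kernels of quantum symmetrizers). For generators, $[x_i,x_j]_L=p_{j,i}x_ix_j-p_{i,j}x_jx_i$ and $[x_i,x_j]_R=p_{i,j}x_ix_j-p_{j,i}x_jx_i$. *)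

(* Defs.v *)
From HB Require Import structures.
From mathcomp Require Import all_boot all_order all_algebra.
Set Implicit Arguments. Unset Strict Implicit. Unset Printing Implicit Defensive.
Import GRing.Theory.
Local Open Scope ring_scope.

(* The tensor algebra T(V) of V with basis x_0..x_{n-1} is modelled by
   coefficient functions on words (seq 'I_n): u w = coefficient of
   x_{w_1} ... x_{w_k}.  Elements of T(V) are the finitely supported ones. *)
Definition tensor (F : fieldType) (n : nat) := seq 'I_n -> F.

Section Nichols.
Variables (F : fieldType) (n : nat) (p : 'I_n -> 'I_n -> F).

Definition mon (w : seq 'I_n) : tensor F n := fun v => (v == w)%:R.

Definition tadd (u v : tensor F n) : tensor F n := fun w => u w + v w.
Definition tscale (a : F) (u : tensor F n) : tensor F n := fun w => a * u w.
Definition tsub (u v : tensor F n) : tensor F n := fun w => u w - v w.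

Fixpoint swapw (k : nat) (w : seq 'I_n) : seq 'I_n :=
  match k, w with
  | 0, a :: b :: t => b :: a :: t
  | k'.+1, a :: t => a :: swapw k' t
  | _, _ => w
  end.

(* the braiding c acting on the tensor factors at positions k, k+1:
   c (x_a (x) x_b) = p_{a,b} x_b (x) x_a, extended linearly.  The coefficient
   of a word w' = .. b a .. in c u is p_{a,b} times the coefficient of
   .. a b .. in u.  (Identity on words too short.) *)
Definition br (k : nat) (u : tensor F n) : tensor F n := fun w =>
  match drop k w with
  | b :: a :: _ => p a b * u (swapw k w)
  | _ => u w
  end.

(* chain m j = c_m c_{m-1} ... c_{m-j+1} (1-based braid positions),
   i.e. br (m-1) o ... o br (m-j) (0-based) *)
Fixpoint chain (m j : nat) (u : tensor F n) : tensor F n :=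
  match j with
  | 0 => u
  | j'.+1 => chain m j' (br (m - j'.+1) u)
  end.

(* (S (x) id) : apply an operator on the first (size w - 1) letters *)
Definition lift_first (op : tensor F n -> tensor F n) (u : tensor F n)
  : tensor F n := fun w =>
  let m := (size w).-1 in op (fun v => u (v ++ drop m w)) (take m w).

(* quantum symmetrizer S_m via the standard recursion
   S_1 = id,  S_{m+1} = (S_m (x) id) (1 + c_m + c_m c_{m-1} + ... + c_m ... c_1) *)
Fixpoint qsym (m : nat) (u : tensor F n) : tensor F n :=
  match m with
  | 0 => u
  | m'.+1 => lift_first (qsym m') (fun w => \sum_(j < m'.+1) chain m' j u w)
  end.

Definition homog (m : nat) (u : tensor F n) : tensor F n :=
  fun w => if size w == m then u w else 0.

(* u is zero in B(V) = T(V) / (+)_{m>=2} ker S_m , i.e. u lies in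
   (+)_{m>=2} ker S_m *)
Definition nichols_zero (u : tensor F n) : Prop :=
  (forall w, (size w <= 1)%N -> u w = 0) /\
  (forall m, (2 <= m)%N -> forall w, size w = m -> qsym m (homog m u) w = 0).

Definition brL (i j : 'I_n) : tensor F n :=
  tsub (tscale (p j i) (mon [:: i; j])) (tscale (p i j) (mon [:: j; i])).
Definition brR (i j : 'I_n) : tensor F n :=
  tsub (tscale (p i j) (mon [:: i; j])) (tscale (p j i) (mon [:: j; i])).

End Nichols.

(* Main.v *)
Require Import Defs.
From mathcomp Require Import all_boot all_order all_algebra.
From Stdlib Require Import FunctionalExtensionality.
Import GRing.Theory.
Local Open Scope ring_scope.

Section H.
Variables (F : fieldType) (n : nat) (p : 'I_n -> 'I_n -> F).

Lemma chain_zero m j (u : tensor F n) :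
  (forall w, u w = 0) -> forall w, chain p m j u w = 0.
Proof.
elim: j u => [|j IH] u hu w //=.
apply: IH => v; rewrite /br; case: (drop _ v) => [|b [|a t]]; rewrite ?hu ?mulr0 //.
Qed.

Lemma qsym_zero m (u : tensor F n) :
  (forall w, u w = 0) -> forall w, qsym p m u w = 0.
Proof.
elim: m u => [|m IH] u hu w //=.
rewrite /lift_first; apply: IH => v.
by rewrite big1 // => k _; apply: chain_zero.
Qed.

Lemma qsym2 (u : tensor F n) w : qsym p 2 u w = u w + br p 0 u w.
Proof.
rewrite /= /lift_first /= big_ord_recr big_ord0 /=.
rewrite !cat_take_drop !big_ord_recr big_ord0 /=.
by rewrite !add0r subnn.

Qed.

Lemma nz_char (u : tensor F n) :
  (forall w, size w != 2%N -> u w = 0) ->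
  nichols_zero p u <-> (forall w, size w = 2%N -> u w + br p 0 u w = 0).
Proof.
move=> hu; have E : homog 2 u = u.
  apply: functional_extensionality => w; rewrite /homog.
  by case: eqP => // /eqP /hu ->.
split.
  by case=> _ h w hw; rewrite -qsym2 -E; apply: h.
move=> h; split.
  by move=> w hw; apply: hu; case: w hw => [|a [|b t]].
move=> m hm w hw; case: (m =P 2%N) => [e|ne]; first by subst m; rewrite e E qsym2; apply: h.
apply: qsym_zero => v; rewrite /homog; case: eqP => // hv; apply: hu.
by rewrite hv; apply/eqP.
Qed.

Definition U (i j : 'I_n) (al be : F) : tensor F n :=
  tsub (tscale al (mon F [:: i; j])) (tscale be (mon F [:: j; i])).

Lemma U_supp i j al be w : size w != 2%N -> U i j al be w = 0.
Proof.
rewrite /U /tsub /tscale /mon => hw.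
have h1 : (w == [:: i; j]) = false by apply/eqP => e; rewrite e in hw.
have h2 : (w == [:: j; i]) = false by apply/eqP => e; rewrite e in hw.
by rewrite h1 h2 !mulr0 subr0.
Qed.

Lemma U_key i j al be : i != j ->
  nichols_zero p (U i j al be) <-> (al - p j i * be = 0 /\ p i j * al - be = 0).
Proof.
move=> hij; apply: iff_trans (@nz_char (U i j al be) (@U_supp i j al be)) _.
have ji : (j == i) = false by apply/negbTE; rewrite eq_sym.
have ij : (i == j) = false by apply/negbTE.
split.
  move=> h; split.
    have := h [:: i; j] erefl; rewrite /br /= /U /tsub /tscale /mon /=.
    by rewrite !eqseq_cons ij ji !eqxx /= !mulr1 !mulr0 !subr0 !sub0r mulrN.
  have := h [:: j; i] erefl; rewrite /br /= /U /tsub /tscale /mon /=.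
  rewrite !eqseq_cons ij ji !eqxx /= !mulr1 !mulr0 !subr0 !sub0r => e.
  by rewrite -e addrC.
case=> h1 h2 [|b [|a [|c t]]] //= _.
rewrite /br /= /U /tsub /tscale /mon /= !eqseq_cons !andbT.
case: (eqVneq b i) => [->|bi]; case: (eqVneq a j) => [->|aj] /=;
  rewrite ?ij ?ji ?eqxx /= ?andbF ?mulr1 ?mulr0 ?subr0 ?sub0r ?mulrN.
- exact: h1.
- by rewrite mulr0 addr0.
- by rewrite mulr0 addr0.
- case: (eqVneq b j) => [->|bj]; case: (eqVneq a i) => [->|ai] /=;
    rewrite ?eqxx ?ij ?ji /= ?andbF ?mulr0 ?mulr1 ?subr0 ?sub0r ?mulrN ?oppr0 ?addr0 ?add0r //.
  by rewrite addrC.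
Qed.
End H.

Theorem lemma1p4 (F : fieldType) (n : nat) (p : 'I_n -> 'I_n -> F)
  (charF : [pchar F] =i pred0)
  (p_nz : forall a b : 'I_n, p a b != 0)
  (i j : 'I_n) (hij : i != j) :
  (nichols_zero p (brL p i j) <-> (p i j = 1 /\ p j i = 1)) /\
  (nichols_zero p (brR p i j) <->
     ((p i j = 1 /\ p j i = 1) \/
      exists omega : F, 3.-primitive_root omega /\
        ((p i j = omega /\ p j i = omega ^+ 2) \/
         (p i j = omega ^+ 2 /\ p j i = omega)))).
Proof.
have hA := p_nz i j; have hB := p_nz j i.
split.
  apply: iff_trans (@U_key F n p i j (p j i) (p i j) hij) _.
  move: hA hB; set a := p i j; set b := p j i => hA hB.
  split.
    case=> e1 e2; split.
      have: b * (1 - a) == 0 by rewrite mulrBr mulr1 e1.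
      by rewrite mulf_eq0 (negbTE hB) /= subr_eq0 eq_sym => /eqP.
    have: a * (b - 1) == 0 by rewrite mulrBr mulr1 e2.
    by rewrite mulf_eq0 (negbTE hA) /= subr_eq0 => /eqP.
  by case=> -> ->; rewrite mulr1 subrr.
apply: iff_trans (@U_key F n p i j (p i j) (p j i) hij) _.
move: hA hB; set a := p i j; set b := p j i => hA hB.
split.
  case=> /eqP; rewrite subr_eq0 => /eqP e1 /eqP; rewrite subr_eq0 => /eqP e2.
  have a3 : a ^+ 3 = 1.
    have: a * (a ^+ 3 - 1) = 0.
      by rewrite mulrBr mulr1 -exprS (exprM a 2 2) (expr2 a) e2 expr2 -e1 subrr.
    by move/eqP; rewrite mulf_eq0 (negbTE hA) /= subr_eq0 => /eqP.
  have eb : b = a ^+ 2 by rewrite expr2.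
  case: (eqVneq a 1) => [a1|an1].
    by left; split=> //; rewrite eb a1 expr1n.
  right; exists a; split; last by left.
  have [m pm dm] := prim_order_exists (isT : (0 < 3)%N) a3.
  move: m pm dm => [|[|[|[|m]]]] pm dm //.
  by move: (prim_expr_order pm); rewrite expr1 => e; rewrite e eqxx in an1.
case=> [[e1 e2]|[w [pw [[e1 e2]|[e1 e2]]]]]; rewrite e1 e2; first by rewrite mulr1 subrr.
all: have w3 := prim_expr_order pw.
all: rewrite -!expr2 -!exprM (_ : (2*2 = 1+3)%N) // exprD w3 mulr1 expr1 !subrr.
all: by [].
Qed.
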